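(* Let $\beta>0$, $m\ge1$, and let $j\ne k$ and $s$ be positive integers with $\max\{jm,km\}\le s$. Fix any values of $f_2,\dots,f_s$ (so $H_s$ is fixed), let $e_1$ be a half-edge at $w_j$ in $H_s$ and $e_2$ a half-edge at $w_k$ in $H_s$, and for $t\ge s$ let $A_t$ be the block of $\Pi_{j,s}(t)$ containing $e_1$ and $B_t$ the block of $\Pi_{k,s}(t)$ containing $e_2$ (so neither is a base block). Then for all $t\ge s$, \[ \mathbb{E}[|A_t||B_t|]\le\mathbb{E}[|A_t|]\,\mathbb{E}[|B_t|]\le (t/s)^{2/(2+\beta)}\left(1+O(1/s)\right), \] where expectations are over $f_{s+1},\dots,f_t$ and the implied constant depends only on $\beta$.
   Context: Fix a real $\beta>0$ and a positive integer $m$. The random tree process $(G^n_{1,\beta})_{n\ge1}$ is defined as follows. $G^1_{1,\beta}$ consists of a single vertex $v_1$ and no edges. Given $G^n_{1,\beta}$ with vertices $v_1,\dots,v_n$ and directed edges $e_2,\dots,e_n$ (where $e_i$ is the edge whose tail is $v_i$), $G^{n+1}_{1,\beta}$ is obtained by adding a vertex $v_{n+1}$ and a directed edge $e_{n+1}$ with tail $v_{n+1}$ and head a ''target vertex'' determined by a random variable $f_{n+1}$, independent of $f_2,\dots,f_n$, taking values in $\Omega_{n+1}=\{(i,v):1\le i\le n\}\cup\{(i,h),(i,t):2\le i\le n\}$ with $\Pr(f_{n+1}=(i,v))=\beta/((2+\beta)n-2)$ and $\Pr(f_{n+1}=(i,h))=\Pr(f_{n+1}=(i,t))=1/((2+\beta)n-2)$.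 If $f_{n+1}=(i,v)$ the target is $v_i$ (chosen ''uniformly''); if $f_{n+1}=(i,h)$ the target is the head of $e_i$, and if $f_{n+1}=(i,t)$ the target is the tail $v_i$ of $e_i$ (chosen ''preferentially'', by copying the head half-edge, resp. tail half-edge, of $e_i$). Consequently the target is $v_i$ with probability $(d_n(v_i)+\beta)/((2+\beta)n-2)$, where $d_n(v)$ is the degree of $v$ in $G^n_{1,\beta}$. Each edge is regarded as two half-edges, one at each endpoint; the degree of a vertex is the number of half-edges at it (loops count twice). For $t\ge1$, $H_t$ is the undirected multigraph formed from $G^t_{1,\beta}$ by identifying, for each $j<\lceil t/m\rceil$, the vertices $v_{(j-1)m+1},\dots,v_{jm}$ into one vertex $w_j$, and identifying the remaining vertices into one vertex $w_{\lceil t/m\rceil}$ (all edges kept). For a vertex $w_k$ of $H_s$ with $km\le s$ and $t\ge s$, the partition $\Pi_{k,s}(t)$ of the half-edges at $w_k$ in $H_t$ is defined inductively: $\Pi_{k,s}(s)$ consists of a singleton block for each of the $d_s(w_k)$ half-edges at $w_k$ in $H_s$ together with one additional, initially empty, ''base block''. For $t>s$: if the target of the edge $e_t$ added at time $t$ does not lie in $w_k$, then $\Pi_{k,s}(t)=\Pi_{k,s}(t-1)$; if it does, and it was chosen preferentially by copying a half-edge lying in a block $A$ of $\Pi_{k,s}(t-1)$, then the head half-edge of $e_t$ is added to $A$; if it was chosen uniformly, the head half-edge of $e_t$ is added to the base block. *)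

(* Defs.v *)
From Stdlib Require Import Reals List Arith.
Import ListNotations.
Open Scope R_scope.

(** The value of f_n : element of Omega_n.
    [Unif i] = (i,v), [HeadC i] = (i,h), [TailC i] = (i,t). *)
Inductive choice : Type :=
| Unif : nat -> choice
| HeadC : nat -> choice
| TailC : nat -> choice.

Definition Omega (n : nat) : list choice :=
  map Unif (seq 1 (n - 1)) ++ map HeadC (seq 2 (n - 2)) ++ map TailC (seq 2 (n - 2)).

Definition in_Omega (n : nat) (c : choice) : Prop :=
  match c with
  | Unif i => (1 <= i <= n - 1)%nat
  | HeadC i | TailC i => (2 <= i <= n - 1)%nat
  end.

Definition prob (beta : R) (n : nat) (c : choice) : R :=
  (match c with Unif _ => beta | _ => 1 end) / ((2 + beta) * INR (n - 1) - 2).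

(** A history: f n is the value of f_n (only n >= 2 matter). *)
Definition history := nat -> choice.

Definition update (f : history) (n : nat) (c : choice) : history :=
  fun k => if Nat.eqb k n then c else f k.

(** Index of the target vertex of edge e_n (fuel-based recursion; fuel n suffices). *)
Fixpoint target_aux (fuel : nat) (f : history) (n : nat) : nat :=
  match fuel with
  | O => O
  | S fu =>
      match f n with
      | Unif i => i
      | TailC i => i
      | HeadC i => target_aux fu f i
      end
  end.

Definition target (f : history) (n : nat) : nat := target_aux n f n.

(** Half-edges: (i, true) = head half-edge of e_i, (i, false) = tail half-edge of e_i. *)
Definition halfedge := (nat * bool)%type.

Definition hvert (f : history) (h : halfedge) : nat :=
  if snd h then target f (fst h) else fst h.

(** Index k of the vertex w_k of H_t containing v_i: w_k = {v_((k-1)m+1),...,v_(km)},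
    the last vertex of H_t collecting the remaining v_i, i <= t; i.e. k = ceil(i/m). *)
Definition group (m i : nat) : nat := ((i + m - 1) / m)%nat.

Definition halfedges (t : nat) : list halfedge :=
  flat_map (fun i => [(i, true); (i, false)]) (seq 2 (t - 1)).

(** [inblock s e f h]: in the partition Pi_{.,s}(t), the half-edge h lies in the
    (non-base) block that started as the singleton {e}.  Half-edges present at time s
    form singleton blocks; a head half-edge of e_n (n > s) chosen preferentially by
    copying half-edge g joins the block of g; chosen uniformly it joins the base block. *)
Fixpoint inblock_aux (fuel : nat) (s : nat) (e : halfedge) (f : history)
  (h : halfedge) : bool :=
  match fuel with
  | O => false
  | S fu =>
      if Nat.leb (fst h) s then (Nat.eqb (fst h) (fst e) && Bool.eqb (snd h) (snd e))%bool
      else if snd h then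
        match f (fst h) with
        | Unif _ => false
        | HeadC i => inblock_aux fu s e f (i, true)
        | TailC i => inblock_aux fu s e f (i, false)
        end
      else false
  end.

Definition inblock (s : nat) (e : halfedge) (f : history) (h : halfedge) : bool :=
  inblock_aux (S (fst h)) s e f h.

(** |block of Pi_{k,s}(t) containing e| : number of half-edges of H_t at w_k in that block. *)
Definition block_size (m k s t : nat) (e : halfedge) (f : history) : R :=
  INR (length (filter (fun h => (Nat.eqb (group m (hvert f h)) k && inblock s e f h)%bool)
                 (halfedges t))).

(** Expectation over f_n, ..., f_(n+len-1) (independent, f_j distributed on Omega_j),
    the earlier values being those of f. *)
Fixpoint expect (beta : R) (len n : nat) (f : history) (X : history -> R) : R :=
  match len with
  | O => X f
  | S l =>
      fold_right Rplus 0
        (map (fun c => prob beta n c * expect beta l (S n) (update f n c) X) (Omega n))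
  end.

Definition E (beta : R) (s t : nat) (f : history) (X : history -> R) : R :=
  expect beta (t - s) (S s) f X.

(* Main.v *)
Require Import Defs.
From Stdlib Require Import Reals Lra Lia List.
Import ListNotations.
Open Scope R_scope.

Definition valid (N : nat) (f : history) : Prop :=
  forall i, (2 <= i <= N)%nat -> in_Omega i (f i).

Lemma valid_mono N M f : (M <= N)%nat -> valid N f -> valid M f.
Proof. intros H V i Hi. apply V. lia. Qed.

Lemma valid_HeadC N f n i : valid N f -> (2 <= n <= N)%nat -> f n = HeadC i -> (2 <= i <= n - 1)%nat.
Proof. intros V Hn E. specialize (V n Hn). rewrite E in V. exact V. Qed.
Lemma valid_TailC N f n i : valid N f -> (2 <= n <= N)%nat -> f n = TailC i -> (2 <= i <= n - 1)%nat.
Proof. intros V Hn E. specialize (V n Hn). rewrite E in V. exact V. Qed.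

Lemma target_fuel N f : valid N f -> forall a b n, (2 <= n <= N)%nat -> (n <= a)%nat -> (n <= b)%nat ->
  target_aux a f n = target_aux b f n.
Proof.
  intros V a. induction a as [|a IH]; intros b n Hn Ha Hb; [lia|].
  destruct b as [|b]; [lia|]. simpl.
  destruct (f n) eqn:E; auto.
  pose proof (valid_HeadC N f n n0 V Hn E). apply IH; lia.
Qed.

Lemma target_local f g : forall fuel n, (forall i, (i <= n)%nat -> g i = f i) -> valid n f -> (2 <= n)%nat ->
  target_aux fuel g n = target_aux fuel f n.
Proof.
  intro fuel. induction fuel as [|fu IH]; intros n Hag V Hn; [reflexivity|].
  simpl. rewrite (Hag n (le_n n)). destruct (f n) eqn:E; auto.
  pose proof (valid_HeadC n f n n0 V ltac:(lia) E).
  apply IH. intros i Hi; apply Hag; lia. apply (valid_mono n); [lia|auto]. lia.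
Qed.

Lemma inblock_fuel s e N f : (1 <= s)%nat -> valid N f -> forall a b h, (fst h <= N)%nat ->
  (fst h < a)%nat -> (fst h < b)%nat -> inblock_aux a s e f h = inblock_aux b s e f h.
Proof.
  intros Hs V a. induction a as [|a IH]; intros b h HN Ha Hb; [lia|].
  destruct b as [|b]; [lia|]. simpl.
  destruct (Nat.leb (fst h) s) eqn:L; auto.
  apply Nat.leb_gt in L.
  destruct (snd h); auto.
  destruct (f (fst h)) eqn:E; auto.
  - pose proof (valid_HeadC N f (fst h) n V ltac:(lia) E). apply IH; simpl; lia.
  - pose proof (valid_TailC N f (fst h) n V ltac:(lia) E). apply IH; simpl; lia.
Qed.

Lemma inblock_local s e f g : (1 <= s)%nat -> forall fuel h,
  (forall i, (i <= fst h)%nat -> g i = f i) -> valid (fst h) f ->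
  inblock_aux fuel s e g h = inblock_aux fuel s e f h.
Proof.
  intros Hs fuel. induction fuel as [|fu IH]; intros h Hag V; [reflexivity|].
  simpl. destruct (Nat.leb (fst h) s) eqn:L; auto.
  apply Nat.leb_gt in L.
  destruct (snd h); auto.
  rewrite (Hag _ (le_n _)).
  destruct (f (fst h)) eqn:E; auto.
  - pose proof (valid_HeadC (fst h) f (fst h) n V ltac:(lia) E). apply IH; simpl.
    intros i Hi; apply Hag; lia. apply (valid_mono (fst h)); [lia|auto].
  - pose proof (valid_TailC (fst h) f (fst h) n V ltac:(lia) E). apply IH; simpl.
    intros i Hi; apply Hag; lia. apply (valid_mono (fst h)); [lia|auto].
Qed.

Lemma inblock_unfold s e N f n : (1 <= s)%nat -> valid N f -> (s < n)%nat -> (n <= N)%nat ->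
  inblock s e f (n, true) = match f n with
     | Unif _ => false
     | HeadC i => inblock s e f (i, true)
     | TailC i => inblock s e f (i, false) end.
Proof.
  intros Hs V Hn HN. unfold inblock at 1. cbn [inblock_aux fst snd].
  assert (L : Nat.leb n s = false) by (apply Nat.leb_gt; lia). rewrite L.
  destruct (f n) eqn:E; auto.
  - pose proof (valid_HeadC N f n n0 V ltac:(lia) E).
    apply (inblock_fuel s e N f Hs V); simpl; lia.
  - pose proof (valid_TailC N f n n0 V ltac:(lia) E).
    apply (inblock_fuel s e N f Hs V); simpl; lia.
Qed.

Lemma inblock_low s e f h : (fst h <= s)%nat -> inblock s e f h = true -> h = e.
Proof.
  intros Hh. unfold inblock. simpl.
  assert (L : Nat.leb (fst h) s = true) by (apply Nat.leb_le; lia). rewrite L.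
  intro H. apply andb_prop in H. destruct H as [H1 H2].
  apply Nat.eqb_eq in H1. apply Bool.eqb_prop in H2.
  destruct h, e; simpl in *; subst; reflexivity.
Qed.

Lemma inblock_tail s e f n : (s < n)%nat -> inblock s e f (n, false) = false.
Proof.
  intros Hn. unfold inblock. simpl.
  assert (L : Nat.leb n s = false) by (apply Nat.leb_gt; lia). rewrite L. reflexivity.
Qed.

Lemma target_unfold N f n : valid N f -> (2 <= n <= N)%nat ->
  target f n = match f n with Unif i => i | TailC i => i | HeadC i => target f i end.
Proof.
  intros V Hn. unfold target. destruct n as [|n']; [lia|]. simpl.
  destruct (f (S n')) eqn:E; auto.
  pose proof (valid_HeadC N f (S n') n V Hn E).
  apply (target_fuel N f V); lia.
Qed.

Lemma inblock_hvert s e N f : (1 <= s)%nat -> valid N f -> forall K h, (fst h <= K)%nat ->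
  (2 <= fst h <= N)%nat -> inblock s e f h = true -> hvert f h = hvert f e.
Proof.
  intros Hs V K. induction K as [|K IH]; intros h HK Hh Hin; [lia|].
  destruct (Nat.le_gt_cases (fst h) s) as [Hl|Hl].
  - rewrite (inblock_low s e f h Hl Hin). reflexivity.
  - destruct h as [n b]. simpl in *.
    destruct b.
    + rewrite (inblock_unfold s e N f n Hs V Hl ltac:(lia)) in Hin.
      unfold hvert at 1. simpl. rewrite (target_unfold N f n V Hh).
      destruct (f n) eqn:E; try discriminate.
      * pose proof (valid_HeadC N f n n0 V Hh E).
        rewrite <- (IH (n0, true)); simpl; auto; lia.
      * pose proof (valid_TailC N f n n0 V Hh E).
        rewrite <- (IH (n0, false)); simpl; auto; lia.
    + rewrite inblock_tail in Hin; [discriminate|lia].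
Qed.

Definition b2r (b : bool) : R := if b then 1 else 0.
Definition cnt s e N g : nat := length (filter (inblock s e g) (halfedges N)).
Definition jA s e (f : history) (c : choice) : bool :=
  match c with Unif _ => false | HeadC i => inblock s e f (i, true) | TailC i => inblock s e f (i, false) end.
Definition sumR {A} (l : list A) (w : A -> R) : R := fold_right Rplus 0 (map w l).

Lemma count_flat (P : halfedge -> bool) L :
  INR (length (filter P (flat_map (fun i => [(i, true); (i, false)]) L))) =
  sumR L (fun i => b2r (P (i, true)) + b2r (P (i, false))).
Proof.
  induction L as [|a L IH]; [reflexivity|].
  unfold sumR in *.
  destruct (P (a, true)) eqn:E1, (P (a, false)) eqn:E2; cbn [filter length flat_map app map fold_right]; rewrite ?E1, ?E2; cbn [length]; rewrite ?S_INR, IH; unfold b2r; ring.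
Qed.

Lemma halfedges_S N : (1 <= N)%nat -> halfedges (S N) = halfedges N ++ [(S N, true); (S N, false)].
Proof.
  intros H. unfold halfedges. destruct N as [|N']; [lia|].
  replace (S (S N') - 1)%nat with (S N') by lia.
  replace (S N' - 1)%nat with N' by lia.
  rewrite seq_S, flat_map_app. simpl. replace (S (S N')) with (S (S N')) by reflexivity.
  reflexivity.
Qed.

Lemma in_halfedges N h : In h (halfedges N) -> (2 <= fst h <= N)%nat.
Proof.
  unfold halfedges. rewrite in_flat_map. intros [i [Hi Hh]].
  apply in_seq in Hi. simpl in Hh. destruct Hh as [<-|[<-|[]]]; simpl; lia.
Qed.

Lemma in_Omega_of n c : In c (Omega n) -> in_Omega n c.
Proof.
  unfold Omega. rewrite !in_app_iff, !in_map_iff.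
  intros [[i [<- Hi]]|[[i [<- Hi]]|[i [<- Hi]]]]; apply in_seq in Hi; simpl; lia.
Qed.

Lemma update_eq f n c : update f n c n = c.
Proof. unfold update. rewrite Nat.eqb_refl. reflexivity. Qed.
Lemma update_neq f n c i : i <> n -> update f n c i = f i.
Proof. intros H. unfold update. destruct (Nat.eqb_spec i n); [contradiction|reflexivity]. Qed.

Lemma valid_update N f c : valid N f -> in_Omega (S N) c -> valid (S N) (update f (S N) c).
Proof.
  intros V Hc i Hi. destruct (Nat.eq_dec i (S N)) as [->|ne].
  - rewrite update_eq. exact Hc.
  - rewrite update_neq by auto. apply V. lia.
Qed.

Lemma cnt_step s e N f c : (1 <= s)%nat -> (s <= N)%nat -> valid N f -> In c (Omega (S N)) ->
  INR (cnt s e (S N) (update f (S N) c)) = INR (cnt s e N f) + b2r (jA s e f c).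
Proof.
  intros Hs HsN V Hc.
  pose proof (in_Omega_of _ _ Hc) as Hc'.
  pose proof (valid_update N f c V Hc') as V'.
  assert (loc : forall h, (fst h <= N)%nat -> inblock s e (update f (S N) c) h = inblock s e f h).
  { intros h Hh. unfold inblock. apply inblock_local; auto.
    intros i Hi. apply update_neq. lia. apply (valid_mono N); auto. }
  unfold cnt. rewrite halfedges_S by lia. rewrite filter_app, length_app, plus_INR.
  rewrite (filter_ext_in _ (inblock s e f)).
  2:{ intros h Hh. apply loc. apply in_halfedges in Hh. lia. }
  f_equal.
  cbn [filter].
  rewrite (inblock_unfold s e (S N) _ (S N) Hs V' ltac:(lia) ltac:(lia)).
  rewrite update_eq.
  rewrite (inblock_tail s e _ (S N)) by lia.
  destruct c as [i|i|i]; simpl in Hc' |- *; [reflexivity| |];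
  rewrite loc by (simpl; lia); destruct (inblock s e f _); simpl; unfold b2r; reflexivity.
Qed.

Definition Dn beta N := (2 + beta) * INR N - 2.

Fixpoint Pr beta (r : R) (len N : nat) : R :=
  match len with O => 1 | S l => (1 + r / Dn beta N) * Pr beta r l (S N) end.

Lemma prob_S beta N c : prob beta (S N) c = (match c with Unif _ => beta | _ => 1 end) / Dn beta N.
Proof. unfold prob, Dn. replace (S N - 1)%nat with N by lia. reflexivity. Qed.

Lemma sumR_app {A} (l1 l2 : list A) w : sumR (l1 ++ l2) w = sumR l1 w + sumR l2 w.
Proof. induction l1; unfold sumR in *; simpl; [ring|]. rewrite IHl1. ring. Qed.
Lemma sumR_map {A B} (g : A -> B) l w : sumR (map g l) w = sumR l (fun x => w (g x)).
Proof. unfold sumR. rewrite map_map. reflexivity. Qed.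
Lemma sumR_ext {A} (l : list A) u v : (forall x, In x l -> u x = v x) -> sumR l u = sumR l v.
Proof. intros H. unfold sumR. f_equal. apply map_ext_in. auto. Qed.
Lemma sumR_plus {A} (l : list A) u v : sumR l (fun x => u x + v x) = sumR l u + sumR l v.
Proof. induction l; unfold sumR in *; simpl; [ring|]. rewrite IHl. ring. Qed.
Lemma sumR_scal {A} (l : list A) k u : sumR l (fun x => k * u x) = k * sumR l u.
Proof. induction l; unfold sumR in *; simpl; [ring|]. rewrite IHl. ring. Qed.
Lemma sumR_const {A} (l : list A) k : sumR l (fun _ => k) = INR (length l) * k.
Proof. induction l; unfold sumR in *; simpl length; [simpl; ring|]. rewrite S_INR. simpl. rewrite IHl. ring. Qed.
Lemma sumR_zero {A} (l : list A) u : (forall x, In x l -> u x = 0) -> sumR l u = 0.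
Proof. intros H. rewrite (sumR_ext l u (fun _ => 0)) by auto. rewrite sumR_const. ring. Qed.

Lemma sumR_expand2 {A} (l : list A) p x y a b P :
  sumR l (fun c => p c * ((a + x c) * (b + y c) * P)) =
  P * (a * b * sumR l p + a * sumR l (fun c => p c * y c) + b * sumR l (fun c => p c * x c)
       + sumR l (fun c => p c * x c * y c)).
Proof. induction l; unfold sumR in *; simpl; [ring|]. rewrite IHl. ring. Qed.
Lemma sumR_expand1 {A} (l : list A) p x a P :
  sumR l (fun c => p c * ((a + x c) * P)) = P * (a * sumR l p + sumR l (fun c => p c * x c)).
Proof. induction l; unfold sumR in *; simpl; [ring|]. rewrite IHl. ring. Qed.

Lemma Omega_S N : Omega (S N) = map Unif (seq 1 N) ++ map HeadC (seq 2 (N - 1)) ++ map TailC (seq 2 (N - 1)).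
Proof. unfold Omega. replace (S N - 1)%nat with N by lia. replace (S N - 2)%nat with (N - 1)%nat by lia. reflexivity. Qed.

Lemma sum_prob beta N : (1 <= N)%nat -> Dn beta N <> 0 -> sumR (Omega (S N)) (prob beta (S N)) = 1.
Proof.
  intros HN HD. rewrite Omega_S, !sumR_app, !sumR_map.
  rewrite (sumR_ext _ _ (fun _ => beta / Dn beta N)) by (intros; apply prob_S).
  rewrite (sumR_ext (seq 2 (N-1)) _ (fun _ => 1 / Dn beta N)) by (intros; apply prob_S).
  rewrite (sumR_ext (seq 2 (N-1)) (fun x => prob beta (S N) (TailC x)) (fun _ => 1 / Dn beta N)) by (intros; apply prob_S).
  rewrite !sumR_const, !length_seq. rewrite minus_INR by lia. unfold Dn in *. simpl. field. auto.
Qed.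

Lemma sum_probJ beta s e N f : sumR (Omega (S N)) (fun c => prob beta (S N) c * b2r (jA s e f c)) =
  INR (cnt s e N f) / Dn beta N.
Proof.
  rewrite Omega_S, !sumR_app, !sumR_map.
  rewrite (sumR_zero (seq 1 N)) by (intros; simpl; unfold b2r; ring).
  rewrite (sumR_ext (seq 2 (N-1)) _ (fun x => / Dn beta N * b2r (inblock s e f (x, true))))
    by (intros; rewrite prob_S; simpl; unfold Rdiv; ring).
  rewrite (sumR_ext (seq 2 (N-1)) (fun x => prob beta (S N) (TailC x) * _) (fun x => / Dn beta N * b2r (inblock s e f (x, false))))
    by (intros; rewrite prob_S; simpl; unfold Rdiv; ring).
  rewrite !sumR_scal. unfold cnt, halfedges. rewrite count_flat, sumR_plus. unfold Rdiv. ring.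
Qed.

Lemma hvert_local s e f f0 : valid s f0 -> (forall i, (i <= s)%nat -> f i = f0 i) ->
  (2 <= fst e <= s)%nat -> hvert f e = hvert f0 e.
Proof.
  intros V Ag He. unfold hvert. destruct (snd e); auto. unfold target.
  apply target_local. intros i Hi; apply Ag; lia. apply (valid_mono s); auto; lia. lia.
Qed.

Lemma Dn_pos beta N : 0 < beta -> (2 <= N)%nat -> 0 < Dn beta N.
Proof.
  intros Hb HN. unfold Dn. apply le_INR in HN. simpl in HN. nra.
Qed.

Lemma disj s e1 e2 f0 N f c : (1 <= s)%nat -> valid s f0 -> hvert f0 e1 <> hvert f0 e2 ->
  (2 <= fst e1 <= s)%nat -> (2 <= fst e2 <= s)%nat -> valid N f ->
  (forall i, (i <= s)%nat -> f i = f0 i) -> (s <= N)%nat -> In c (Omega (S N)) ->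
  (jA s e1 f c && jA s e2 f c)%bool = false.
Proof.
  intros Hs V0 Hd He1 He2 V Ag HN Hc. apply in_Omega_of in Hc.
  destruct (jA s e1 f c) eqn:J1; destruct (jA s e2 f c) eqn:J2; auto.
  exfalso. apply Hd.
  rewrite <- (hvert_local s e1 f f0), <- (hvert_local s e2 f f0); auto.
  destruct c as [i|i|i]; simpl in Hc, J1, J2; try discriminate;
  [set (h := (i, true)) | set (h := (i, false))];
  rewrite <- (inblock_hvert s e1 N f Hs V (fst h) h (le_n _)); simpl; auto; try lia;
  rewrite <- (inblock_hvert s e2 N f Hs V (fst h) h (le_n _)); simpl; auto; lia.
Qed.

Lemma joint beta s e1 e2 f0 : 0 < beta -> (2 <= s)%nat -> valid s f0 -> hvert f0 e1 <> hvert f0 e2 ->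
  (2 <= fst e1 <= s)%nat -> (2 <= fst e2 <= s)%nat ->
  forall len N f, (s <= N)%nat -> valid N f -> (forall i, (i <= s)%nat -> f i = f0 i) ->
  expect beta len (S N) f (fun g => INR (cnt s e1 (N + len) g) * INR (cnt s e2 (N + len) g)) =
  INR (cnt s e1 N f) * INR (cnt s e2 N f) * Pr beta 2 len N.
Proof.
  intros Hb Hs V0 Hd He1 He2 len. induction len as [|l IH]; intros N f HN V Ag.
  - simpl. rewrite Nat.add_0_r. ring.
  - cbn [expect]. fold (sumR (Omega (S N)) (fun c => prob beta (S N) c *
       expect beta l (S (S N)) (update f (S N) c)
         (fun g => INR (cnt s e1 (N + S l) g) * INR (cnt s e2 (N + S l) g)))).
    replace (N + S l)%nat with (S N + l)%nat by lia.
    rewrite (sumR_ext _ _ (fun c => prob beta (S N) c *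
       ((INR (cnt s e1 N f) + b2r (jA s e1 f c)) * (INR (cnt s e2 N f) + b2r (jA s e2 f c)) * Pr beta 2 l (S N)))).
    2:{ intros c Hc. pose proof (valid_update N f c V (in_Omega_of _ _ Hc)) as V'.
        rewrite IH; auto. rewrite !cnt_step; auto; lia.
        intros i Hi. rewrite update_neq by lia. auto. }
    rewrite sumR_expand2.
    rewrite sum_prob by (try lia; apply Rgt_not_eq, Dn_pos; auto; lia).
    rewrite !sum_probJ.
    rewrite (sumR_zero (Omega (S N)) (fun c => prob beta (S N) c * b2r (jA s e1 f c) * b2r (jA s e2 f c))).
    2:{ intros c Hc. pose proof (disj s e1 e2 f0 N f c ltac:(lia) V0 Hd He1 He2 V Ag HN Hc) as D.
        destruct (jA s e1 f c), (jA s e2 f c); simpl in D; try discriminate; unfold b2r; ring. }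
    cbn [Pr]. assert (0 < Dn beta N) by (apply Dn_pos; auto; lia). field. lra.
Qed.

Lemma single beta s e : 0 < beta -> (2 <= s)%nat ->
  forall len N f, (s <= N)%nat -> valid N f ->
  expect beta len (S N) f (fun g => INR (cnt s e (N + len) g)) =
  INR (cnt s e N f) * Pr beta 1 len N.
Proof.
  intros Hb Hs len. induction len as [|l IH]; intros N f HN V.
  - simpl. rewrite Nat.add_0_r. ring.
  - cbn [expect]. fold (sumR (Omega (S N)) (fun c => prob beta (S N) c *
       expect beta l (S (S N)) (update f (S N) c) (fun g => INR (cnt s e (N + S l) g)))).
    replace (N + S l)%nat with (S N + l)%nat by lia.
    rewrite (sumR_ext _ _ (fun c => prob beta (S N) c *
       ((INR (cnt s e N f) + b2r (jA s e f c)) * Pr beta 1 l (S N)))).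
    2:{ intros c Hc. pose proof (valid_update N f c V (in_Omega_of _ _ Hc)) as V'.
        rewrite IH; auto. rewrite !cnt_step; auto; lia. }
    rewrite sumR_expand1.
    rewrite sum_prob by (try lia; apply Rgt_not_eq, Dn_pos; auto; lia).
    rewrite !sum_probJ.
    cbn [Pr]. assert (0 < Dn beta N) by (apply Dn_pos; auto; lia). field. lra.
Qed.

Lemma expect_ext beta : forall len N f X Y, valid N f ->
  (forall g, valid (N + len) g -> (forall i, (i <= N)%nat -> g i = f i) -> X g = Y g) ->
  expect beta len (S N) f X = expect beta len (S N) f Y.
Proof.
  intro len. induction len as [|l IH]; intros N f X Y V H.
  - simpl. apply H; auto. rewrite Nat.add_0_r; auto.
  - cbn [expect]. f_equal. apply map_ext_in. intros c Hc. f_equal.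
    apply IH. apply valid_update; auto. apply in_Omega_of; auto.
    intros g Vg Ag. apply H. replace (N + S l)%nat with (S N + l)%nat by lia. auto.
    intros i Hi. rewrite Ag by lia. apply update_neq. lia.
Qed.

Lemma div_nonneg a b : 0 <= a -> 0 < b -> 0 <= a / b.
Proof. intros. unfold Rdiv. apply Rmult_le_pos; auto. left. apply Rinv_0_lt_compat; auto. Qed.

Lemma Pr_nonneg beta r : 0 < beta -> 0 <= r -> forall len N, (2 <= N)%nat -> 0 <= Pr beta r len N.
Proof.
  intros Hb Hr len. induction len as [|l IH]; intros N HN; simpl; [lra|].
  apply Rmult_le_pos; [|apply IH; lia].
  pose proof (Dn_pos beta N Hb HN). assert (0 <= r / Dn beta N) by (apply div_nonneg; lra). lra.
Qed.

Lemma Pr2_le beta : 0 < beta -> forall len N, (2 <= N)%nat -> Pr beta 2 len N <= (Pr beta 1 len N)^2.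
Proof.
  intros Hb len. induction len as [|l IH]; intros N HN; simpl; [lra|].
  pose proof (Dn_pos beta N Hb HN) as HD.
  replace ((1 + 1 / Dn beta N) * Pr beta 1 l (S N) * ((1 + 1 / Dn beta N) * Pr beta 1 l (S N) * 1))
    with ((1 + 1 / Dn beta N)^2 * (Pr beta 1 l (S N))^2) by ring.
  apply Rmult_le_compat.
  - assert (0 <= 2 / Dn beta N) by (apply div_nonneg; lra). lra.
  - apply Pr_nonneg; auto; lra.
  - assert (0 <= (1 / Dn beta N)^2) by (apply pow2_ge_0). replace ((1 + 1 / Dn beta N)^2) with (1 + 2 / Dn beta N + (1/Dn beta N)^2) by (field; lra). lra.
  - apply IH. lia.
Qed.

Lemma ln_le' a b : 0 < a -> a <= b -> ln a <= ln b.
Proof. intros Ha Hab. destruct (Rle_lt_or_eq_dec _ _ Hab) as [h|h]. left; apply ln_increasing; auto. subst; lra. Qed.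
Lemma exp_le' a b : a <= b -> exp a <= exp b.
Proof. intros Hab. destruct (Rle_lt_or_eq_dec _ _ Hab) as [h|h]. left; apply exp_increasing; auto. subst; lra. Qed.

Lemma ln_ineq x : 0 < x -> 1 / (x + 1) <= ln (x + 1) - ln x.
Proof.
  intros Hx.
  pose proof (exp_ineq1_le (- (1 / (x + 1)))) as H.
  assert (E1 : 1 + - (1 / (x + 1)) = x * / (x + 1)) by (field; lra).
  rewrite E1 in H.
  assert (Hp : 0 < x * / (x + 1)) by (apply Rmult_lt_0_compat; [lra| apply Rinv_0_lt_compat; lra]).
  apply ln_le' in H; auto. rewrite ln_exp in H.
  rewrite ln_mult in H by (auto; apply Rinv_0_lt_compat; lra).
  rewrite ln_Rinv in H by lra. lra.
Qed.

Lemma div_le_cross a b c d : 0 < b -> 0 < d -> a * d <= c * b -> a / b <= c / d.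
Proof.
  intros Hb Hd H.
  replace (a / b) with ((a * d) * / (b * d)) by (field; lra).
  replace (c / d) with ((c * b) * / (b * d)) by (field; lra).
  apply Rmult_le_compat_r; auto. left. apply Rinv_0_lt_compat. nra.
Qed.

Lemma term_bound g x : 2 < g -> 2 <= x ->
  1 + 1 / (g * x - 2) <= exp ((1 / g) * (ln (x + 1) - ln x) + 2 / x - 2 / (x + 1)).
Proof.
  intros Hg Hx.
  eapply Rle_trans; [apply exp_ineq1_le|]. apply exp_le'.
  pose proof (ln_ineq x ltac:(lra)) as L.
  assert (L2 : (1/g) * (1 / (x+1)) <= (1/g) * (ln (x + 1) - ln x)).
  { apply Rmult_le_compat_l; auto. left. apply Rdiv_lt_0_compat; lra. }
  assert (A : 1 / (g * x - 2) - (1/g) * (1/(x+1)) <= 2 / x - 2 / (x + 1)).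
  { replace (1 / (g * x - 2) - (1/g) * (1/(x+1))) with ((g + 2) / ((g * x - 2) * g * (x + 1))) by (field; split; nra).
    replace (2 / x - 2 / (x + 1)) with (2 / (x * (x + 1))) by (field; lra).
    apply div_le_cross. assert (0 < g * x - 2) by nra. apply Rmult_lt_0_compat; [nra|lra]. nra.
    assert (0 <= (2*g+1)*(g-2)) by nra.
    assert (0 <= (x-2)*(2*g*g-g-2)) by (apply Rmult_le_pos; nra).
    assert (K : (g+2)*x <= 2*((g*x-2)*g)) by nra.
    replace ((g + 2) * (x * (x + 1))) with (((g+2)*x)*(x+1)) by ring.
    replace (2 * ((g * x - 2) * g * (x + 1))) with ((2*((g*x-2)*g))*(x+1)) by ring.
    apply Rmult_le_compat_r; lra. }
  lra.
Qed.

Lemma Pr1_bound beta : 0 < beta -> forall len N, (2 <= N)%nat ->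
  Pr beta 1 len N <= exp ((1 / (2 + beta)) * (ln (INR (N + len)) - ln (INR N)) + 2 / INR N - 2 / INR (N + len)).
Proof.
  intros Hb len. induction len as [|l IH]; intros N HN.
  - simpl. rewrite Nat.add_0_r. replace (1 / (2 + beta) * (ln (INR N) - ln (INR N)) + 2 / INR N - 2 / INR N) with 0 by ring.
    rewrite exp_0. lra.
  - cbn [Pr].
    assert (HNr : 2 <= INR N) by (apply le_INR in HN; simpl in HN; lra).
    eapply Rle_trans.
    { apply Rmult_le_compat.
      - pose proof (Dn_pos beta N Hb HN). assert (0 <= 1 / Dn beta N) by (apply div_nonneg; lra). lra.
      - apply Pr_nonneg; auto; lra.
      - unfold Dn. apply (term_bound (2 + beta) (INR N)); lra.
      - apply IH; lia. }
    rewrite <- exp_plus. apply exp_le'.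
    replace (S N + l)%nat with (N + S l)%nat by lia. rewrite S_INR. lra.
Qed.

Lemma sum_seq_eq a len x : (a <= x < a + len)%nat -> sumR (seq a len) (fun i => b2r (Nat.eqb i x)) = 1.
Proof.
  revert a. induction len as [|len IH]; intros a Ha; [lia|].
  cbn [seq]. change (sumR (a :: seq (S a) len) (fun i => b2r (i =? x))) with (b2r (a =? x) + sumR (seq (S a) len) (fun i => b2r (i =? x))).
  destruct (Nat.eqb_spec a x) as [->|ne].
  - rewrite (sumR_zero (seq (S x) len)). unfold b2r; ring.
    intros i Hi. apply in_seq in Hi. destruct (Nat.eqb_spec i x); [lia|reflexivity].
  - rewrite IH by lia. unfold b2r; ring.
Qed.

Lemma cnt_init s e f : (2 <= fst e <= s)%nat -> INR (cnt s e s f) = 1.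
Proof.
  intros He. unfold cnt, halfedges. rewrite count_flat.
  rewrite (sumR_ext _ _ (fun i => b2r (Nat.eqb i (fst e)))).
  - apply sum_seq_eq. lia.
  - intros i Hi. apply in_seq in Hi.
    assert (Hl : forall b, inblock s e f (i, b) = ((i =? fst e) && Bool.eqb b (snd e))%bool).
    { intros b. unfold inblock. cbn [inblock_aux fst snd].
      assert (L : Nat.leb i s = true) by (apply Nat.leb_le; lia). rewrite L. reflexivity. }
    rewrite !Hl. destruct (i =? fst e), (snd e); simpl; unfold b2r; ring.
Qed.

Lemma block_conv m j s t e f0 g : (2 <= s)%nat -> valid s f0 -> (2 <= fst e <= s)%nat -> group m (hvert f0 e) = j ->
  valid t g -> (forall i, (i <= s)%nat -> g i = f0 i) ->
  block_size m j s t e g = INR (cnt s e t g).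
Proof.
  intros Hs V0 He Hg Vg Ag. unfold block_size, cnt. f_equal. f_equal.
  apply filter_ext_in. intros h Hh. apply in_halfedges in Hh.
  destruct (inblock s e g h) eqn:I.
  - rewrite (inblock_hvert s e t g ltac:(lia) Vg (fst h) h (le_n _) Hh I).
    rewrite (hvert_local s e g f0); auto. rewrite Hg, Nat.eqb_refl. reflexivity.
  - apply Bool.andb_false_r.
Qed.

Lemma exp_small x : 0 <= x <= 2 -> exp x <= 1 + x * exp 2.
Proof.
  intros Hx. pose proof (exp_ineq1_le (- x)) as H. rewrite exp_Ropp in H.
  pose proof (exp_pos x) as Hp.
  assert (H1 : (1 - x) * exp x <= 1).
  { replace 1 with (/ exp x * exp x) at 2 by (field; lra). apply Rmult_le_compat_r; lra. }
  assert (H2 : x * exp x <= x * exp 2) by (apply Rmult_le_compat_l; [lra|apply exp_le'; lra]).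
  nra.
Qed.

Theorem lemma5 (beta : R) (hbeta : 0 < beta) :
  exists C : R, 0 < C /\
  forall (m j k s : nat) (f0 : history) (e1 e2 : halfedge) (t : nat),
    (1 <= m)%nat -> (1 <= j)%nat -> (1 <= k)%nat -> j <> k ->
    (j * m <= s)%nat -> (k * m <= s)%nat ->
    (forall n, (2 <= n <= s)%nat -> in_Omega n (f0 n)) ->
    (2 <= fst e1 <= s)%nat -> group m (hvert f0 e1) = j ->
    (2 <= fst e2 <= s)%nat -> group m (hvert f0 e2) = k ->
    (s <= t)%nat ->
    E beta s t f0 (fun f => block_size m j s t e1 f * block_size m k s t e2 f)
      <= E beta s t f0 (block_size m j s t e1) * E beta s t f0 (block_size m k s t e2)
    /\
    E beta s t f0 (block_size m j s t e1) * E beta s t f0 (block_size m k s t e2)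
      <= Rpower (INR t / INR s) (2 / (2 + beta)) * (1 + C / INR s).
Proof.
  exists (4 * exp 2). split. { pose proof (exp_pos 2). lra. }
  intros m j k s f0 e1 e2 t Hm Hj Hk Hjk Hjm Hkm V0 He1 Hg1 He2 Hg2 Hst.
  assert (Hs : (2 <= s)%nat) by lia.
  assert (V0' : valid s f0) by exact V0.
  assert (Hd : hvert f0 e1 <> hvert f0 e2) by (intro Heq; apply Hjk; rewrite <- Hg1, <- Hg2, Heq; reflexivity).
  assert (Hst' : (s + (t - s))%nat = t) by lia.
  unfold E.
  assert (EA : forall e jj, (2 <= fst e <= s)%nat -> group m (hvert f0 e) = jj ->
     expect beta (t - s) (S s) f0 (block_size m jj s t e) = Pr beta 1 (t - s) s).
  { intros e jj He Hg.
    rewrite (expect_ext beta (t - s) s f0 _ (fun g => INR (cnt s e (s + (t - s)) g))); auto.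
    - rewrite single; auto. rewrite cnt_init; auto. ring.
    - intros g Vg Ag. rewrite Hst' in *. apply (block_conv m jj s t e f0 g); auto. }
  rewrite (EA e1 j), (EA e2 k) by auto.
  rewrite (expect_ext beta (t - s) s f0 _ (fun g => INR (cnt s e1 (s + (t - s)) g) * INR (cnt s e2 (s + (t - s)) g))); auto.
  2:{ intros g Vg Ag. rewrite Hst' in *. rewrite !(block_conv _ _ s t _ f0 g); auto. }
  rewrite (joint beta s e1 e2 f0); auto. rewrite !cnt_init; auto.
  split.
  { rewrite !Rmult_1_l. pose proof (Pr2_le beta hbeta (t - s) s Hs). simpl in H. lra. }
  pose proof (Pr1_bound beta hbeta (t - s) s Hs) as B. rewrite Hst' in B.
  pose proof (Pr_nonneg beta 1 hbeta ltac:(lra) (t - s) s Hs) as P0.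
  assert (HS : 2 <= INR s) by (apply le_INR in Hs; simpl in Hs; lra).
  assert (HT : INR s <= INR t) by (apply le_INR; auto).
  set (P := Pr beta 1 (t - s) s) in *.
  set (Bv := 1 / (2 + beta) * (ln (INR t) - ln (INR s)) + 2 / INR s - 2 / INR t) in *.
  assert (PP : P * P <= exp Bv * exp Bv) by (apply Rmult_le_compat; auto).
  rewrite <- exp_plus in PP.
  assert (Lq : ln (INR t / INR s) = ln (INR t) - ln (INR s)).
  { unfold Rdiv. rewrite ln_mult, ln_Rinv; try lra. apply Rinv_0_lt_compat; lra. }
  assert (BB : Bv + Bv <= 2 / (2 + beta) * ln (INR t / INR s) + 4 / INR s).
  { rewrite Lq. unfold Bv. assert (0 <= 2 / INR t) by (apply div_nonneg; lra).
    replace (2 / (2 + beta) * (ln (INR t) - ln (INR s))) with (2 * (1 / (2 + beta) * (ln (INR t) - ln (INR s)))) by (field; lra).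
    replace (4 / INR s) with (2 * (2 / INR s)) by (field; lra). lra. }
  apply exp_le' in BB. rewrite (exp_plus (2 / (2 + beta) * ln (INR t / INR s))) in BB.
  unfold Rpower. replace (1 * P * (1 * P)) with (P * P) by ring.
  eapply Rle_trans; [exact PP|]. eapply Rle_trans; [exact BB|].
  apply Rmult_le_compat_l; [left; apply exp_pos|].
  pose proof (exp_small (4 / INR s)) as X.
  assert (X1 : 0 <= 4 / INR s <= 2).
  { split. apply div_nonneg; lra. pose proof (div_le_cross 4 (INR s) 2 1 ltac:(lra) ltac:(lra) ltac:(lra)) as Q. replace (2 / 1) with 2 in Q by field. exact Q. }
  specialize (X X1). replace (4 * exp 2 / INR s) with (4 / INR s * exp 2) by (field; lra). lra.
Qed.
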